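(* Let $V$ be a countable set, $\Omega_0$ a finite set, $\Omega=\Omega_0^V$ with product $\sigma$-algebra $\mathcal F$, $q\in\mathbb N$, and let $\gamma=(\gamma_\Lambda)_{\Lambda\Subset V}$ be a $q$-specification satisfying Assumption 1. For $\Lambda\Subset V$ let $V_{q,\Lambda}:\mathcal M_1(\Omega,\mathcal F)\to\mathcal M_1(\Omega,\mathcal F)$ be given by $V_{q,\Lambda}(\lambda)(A)=\int_{\Omega^q}\gamma_\Lambda(A\mid\sigma_1,\dots,\sigma_q)\prod_{i=1}^q\lambda(d\sigma_i)$, $A\in\mathcal F$. Then $$\mathcal G_q(\gamma)=\bigcap_{\Lambda\Subset V}\mathrm{Im}(V_{q,\Lambda}).$$
   Context: $\mathcal M_1(\Omega,\mathcal F)$ is the set of probability measures on $(\Omega,\mathcal F)$; $\mathrm{Im}$ denotes the image. $\mathcal F_\Delta$ is generated by coordinates in $\Delta$; $\mathcal F^q_{\Lambda^c}=(\mathcal F_{\Lambda^c})^{\otimes q}$. A probability $q$-kernel is a map $\gamma_\Lambda:\mathcal F\times\Omega^q\to[0,1]$ with $\gamma_\Lambda(\cdot\mid\eta_1,\dots,\eta_q)$ a probability measure and $\gamma_\Lambda(A\mid\cdot)$ $\mathcal F^q_{\Lambda^c}$-measurable; proper means $\gamma_\Lambda(A\mid\eta_1,\dots,\eta_q)=\frac1q\sum_i\mathbf 1_A(\eta_i)$ for $A\in\mathcal F_{\Lambda^c}$. Composition: $(\gamma_\Delta\gamma_\Lambda)(A\mid\eta)=\int_{\Omega^q}\gamma_\Lambda(A\mid\zeta_1,\dots,\zeta_q)\prod_i\gamma_\Delta(d\zeta_i\mid\eta)$.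 A $q$-specification is a family of proper probability $q$-kernels with $\gamma_\Delta\gamma_\Lambda=\gamma_\Delta$ for $\Lambda\subset\Delta\Subset V$. $\mathcal G_q(\gamma)$ is the set of $\mu\in\mathcal M_1(\Omega,\mathcal F)$ with $V_{q,\Lambda}(\mu)=\mu$ for all $\Lambda\Subset V$. Assumption 1: for each $\Lambda\Subset V$ there is a measurable $\tilde\gamma_\Lambda:\mathcal F\times\mathcal M_1(\Omega)\to[0,1]$ with $\gamma_\Lambda(A\mid\sigma_1,\dots,\sigma_q)=\tilde\gamma_\Lambda\big(A;\frac1q\sum_{i=1}^q\delta_{\sigma_i}\big)$ for all $A,\sigma_1,\dots,\sigma_q$. *)

(* Defs.v *)
From HB Require Import structures.
From mathcomp Require Import all_boot all_order all_algebra.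
From mathcomp Require Import all_classical all_reals all_analysis.
From mathcomp Require Import measurable_realfun.
Set Implicit Arguments. Unset Strict Implicit. Unset Printing Implicit Defensive.
Import Order.TTheory GRing.Theory Num.Theory.
Local Open Scope classical_set_scope.
Local Open Scope ring_scope.

(* The library's measurable types must be pointed, so we carry a point
   w0 of S^V (harmless: if S^V is empty there are no probability measures). *)
Section config.
Variables (V : countType) (S : finType) (w0 : V -> S).

Definition config := V -> S.
HB.instance Definition _ := gen_eqMixin config.
HB.instance Definition _ := gen_choiceMixin config.
HB.instance Definition _ := isPointed.Build config w0.

Definition coord_sets (D : set V) : set (set config) :=
  fun A => exists v a, D v /\ A = [set w : config | w v = a].

Definition Omega := g_sigma_algebraType (coord_sets setT).

Definition F_ (D : set V) : set (set Omega) := <<s coord_sets D >>.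

Definition Fq_ (q : nat) (D : set V) : set (set (q.-tuple Omega)) :=
  <<s fun B => exists (i : 'I_q) v a, D v /\
        B = [set t : q.-tuple Omega | tnth t i v = a] >>.

Variable R : realType.

(* integral over Omega^n against the product measure P^{\otimes n},
   written as an iterated integral *)
Fixpoint iter_int (P : probability Omega R) (n : nat) :
    (n.-tuple Omega -> \bar R) -> \bar R :=
  match n with
  | 0 => fun f => f [tuple]
  | m.+1 => fun f => (\int[P]_x iter_int P (fun t => f (cons_tuple x t)))%E
  end.

Variable q : nat.

Definition empirical (sigma : q.-tuple Omega) (B : set Omega) : \bar R :=
  ((q%:R)^-1 * \sum_(i < q) \1_B (tnth sigma i))%:E.

Definition qkernel_family := set V -> q.-tuple Omega -> probability Omega R.

Definition proper_qkernel (L : set V) (g : q.-tuple Omega -> probability Omega R) :=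
  forall A, F_ (~` L) A -> forall eta, g eta A = empirical eta A.

Definition qkernel_measurable (L : set V)
    (g : q.-tuple Omega -> probability Omega R) :=
  forall A : set Omega, measurable A -> forall B : set (\bar R), measurable B ->
    Fq_ (q:=q) (~` L) ((fun eta => g eta A) @^-1` B).

Definition qcomp (gD gL : q.-tuple Omega -> probability Omega R)
    (A : set Omega) (eta : q.-tuple Omega) : \bar R :=
  iter_int (gD eta) (fun zeta => gL zeta A).

Definition qspecification (gamma : qkernel_family) :=
  (forall L, finite_set L -> qkernel_measurable L (gamma L) /\
                             proper_qkernel L (gamma L)) /\
  (forall L D, finite_set L -> finite_set D -> L `<=` D ->
     forall A : set Omega, measurable A -> forall eta,
       qcomp (gamma D) (gamma L) A eta = gamma D eta A).

Definition assumption1 (gamma : qkernel_family) :=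
  forall L, finite_set L ->
  exists gt : set Omega -> pprobability Omega R -> \bar R,
    (forall A : set Omega, measurable A -> measurable_fun setT (gt A)) /\
    (forall A : set Omega, measurable A -> forall nu, (0 <= gt A nu <= 1)%E) /\
    (forall A : set Omega, measurable A -> forall (sigma : q.-tuple Omega)
        (nu : probability Omega R),
        (forall B : set Omega, measurable B -> nu B = empirical sigma B) ->
        gamma L sigma A = gt A nu).

Definition Vq (gamma : qkernel_family) (L : set V) (lam : probability Omega R)
    (A : set Omega) : \bar R :=
  iter_int lam (fun sigma => gamma L sigma A).

Definition Gq (gamma : qkernel_family) : set (probability Omega R) :=
  [set mu | forall L, finite_set L -> forall A : set Omega, measurable A ->
              Vq gamma L mu A = mu A].

Definition ImVq (gamma : qkernel_family) (L : set V) : set (probability Omega R) :=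
  [set mu | exists lam : probability Omega R,
              forall A : set Omega, measurable A -> Vq gamma L lam A = mu A].

End config.

(* Main.v *)
Require Import Defs.
From HB Require Import structures.
From mathcomp Require Import all_boot all_order all_algebra.
From mathcomp Require Import all_classical all_reals all_analysis.
From mathcomp Require Import measurable_realfun.
From mathcomp Require Import ring lra.
Set Implicit Arguments. Unset Strict Implicit. Unset Printing Implicit Defensive.
Import Order.TTheory GRing.Theory Num.Theory.
Local Open Scope classical_set_scope.
Local Open Scope ring_scope.

Lemma preimage_gen (X Y : Type) (phi : X -> Y) (G : set (set Y)) (Sig : set (set X)) :
  sigma_algebra setT Sig -> (forall B, G B -> Sig (phi @^-1` B)) ->
  forall B, <<s G>> B -> Sig (phi @^-1` B).
Proof.
move=> [S0 SC SU] HG B HB.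
have : sigma_algebra setT [set B | Sig (phi @^-1` B)].
  split => /=.
  - by rewrite preimage_set0.
  - by move=> A HA; rewrite setTD -preimage_setC -setTD; exact: (SC _ HA).
  - by move=> A HA; rewrite preimage_bigcup; exact: SU.
move=> Hs; exact: (smallest_sub Hs HG HB).
Qed.

Section dev.
Variables (V : countType) (S : finType) (w0 : V -> S) (R : realType) (q : nat).
Hypothesis hq : (0 < q)%N.

Definition Om := @measurable_structure_g_sigma_algebraType__canonical__measurable_structure_Measurable (@Defs_config__canonical__classical_sets_Pointed V S w0) (@coord_sets V S setT).
Definition OmL (L : set V) := @measurable_structure_g_sigma_algebraType__canonical__measurable_structure_Measurable (@Defs_config__canonical__classical_sets_Pointed V S w0) (@coord_sets V S (~` L)).


Lemma F_sigma (D : set V) : sigma_algebra setT (F_ (V:=V) (S:=S) D).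
Proof. exact: smallest_sigma_algebra. Qed.

Lemma Fq_sigma n (D : set V) : sigma_algebra setT (Fq_ (V:=V) (S:=S) (q:=n) D).
Proof. exact: smallest_sigma_algebra. Qed.

Lemma sig_setT T (Sig : set (set T)) : sigma_algebra setT Sig -> Sig setT.
Proof. by move=> [S0 SC _]; have := SC _ S0; rewrite setD0. Qed.

Lemma sig_cst T (Sig : set (set T)) (P : Prop) : sigma_algebra setT Sig -> Sig [set _ | P].
Proof.
move=> Hs; have [HP|HP] := pselect P.
  have -> : [set _ : T | P] = setT.
    by rewrite predeqE => x; split.
  exact: sig_setT.
have -> : [set _ : T | P] = set0.
  by rewrite predeqE => x; split.
by case: Hs.
Qed.

Lemma F_sub (D : set V) (A : set Om) : F_ D A -> measurable A.
Proof.
apply: smallest_sub; first exact: smallest_sigma_algebra.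
move=> B [v [a [_ ->]]]; apply: sub_gen_smallest; exists v, a; by split.
Qed.

Lemma cons_sec n (D : set V) (t : n.-tuple Om) B :
  Fq_ (V:=V) (S:=S) (q:=n.+1) D B -> F_ D ((fun x : Om => cons_tuple x t) @^-1` B).
Proof.
apply: preimage_gen; first exact: F_sigma.
move=> _ [i [v [a [Dv ->]]]].
case: (unliftP ord0 i) => [j ->|->] /=.
- have -> : ((fun x : Om => cons_tuple x t) @^-1` [set u | tnth u (lift ord0 j) v = a])
     = [set _ : Om | tnth t j v = a].
    by apply/seteqP; split => x /=; rewrite tnthS.
  apply: sig_cst; exact: F_sigma.
- have -> : ((fun x : Om => cons_tuple x t) @^-1` [set u | tnth u ord0 v = a])
     = [set x : Om | x v = a].
    by apply/seteqP; split => x /=; rewrite tnth0.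
  by apply: sub_gen_smallest; exists v, a.
Qed.

Lemma cons_fix n (D : set V) (c : Om) B :
  Fq_ (V:=V) (S:=S) (q:=n.+1) D B ->
  Fq_ (V:=V) (S:=S) (q:=n) D ((fun t : n.-tuple Om => cons_tuple c t) @^-1` B).
Proof.
apply: preimage_gen; first exact: Fq_sigma.
move=> _ [i [v [a [Dv ->]]]].
case: (unliftP ord0 i) => [j ->|->] /=.
- have -> : ((fun t : n.-tuple Om => cons_tuple c t) @^-1` [set u | tnth u (lift ord0 j) v = a])
     = [set t : n.-tuple Om | tnth t j v = a].
    by apply/seteqP; split => x /=; rewrite tnthS.
  by apply: sub_gen_smallest; exists j, v, a.
- have -> : ((fun t : n.-tuple Om => cons_tuple c t) @^-1` [set u | tnth u ord0 v = a])
     = [set _ : n.-tuple Om | c v = a].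
    by apply/seteqP; split => x /=; rewrite tnth0.
  apply: sig_cst; exact: Fq_sigma.
Qed.

Definition diag (x : Om) : q.-tuple Om := [tuple of nseq q x].

Lemma diag_pre (D : set V) B :
  Fq_ (V:=V) (S:=S) (q:=q) D B -> F_ D (diag @^-1` B).
Proof.
apply: preimage_gen; first exact: F_sigma.
move=> _ [i [v [a [Dv ->]]]].
have -> : (diag @^-1` [set u | tnth u i v = a]) = [set x : Om | x v = a].
  by apply/seteqP; split => x /=; rewrite /diag tnth_nseq.
by apply: sub_gen_smallest; exists v, a.
Qed.

Lemma mfunL (L : set V) (f : Om -> \bar R) :
  (forall B, measurable B -> F_ (~` L) (f @^-1` B)) ->
  measurable_fun (setT : set (OmL L)) f.
Proof. by move=> H _ Y mY; rewrite setTI; exact: H. Qed.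

Lemma mfunLT (L : set V) (f : Om -> \bar R) :
  measurable_fun (setT : set (OmL L)) f -> measurable_fun (setT : set Om) f.
Proof.
move=> H _ Y mY; have := H (@measurableT _ (OmL L)) Y mY.
rewrite !setTI; exact: F_sub.
Qed.

Lemma mfunLTR (L : set V) (f : Om -> R) :
  measurable_fun (setT : set (OmL L)) f -> measurable_fun (setT : set Om) f.
Proof.
move=> H _ Y mY; have := H (@measurableT _ (OmL L)) Y mY.
rewrite !setTI; exact: F_sub.
Qed.


Definition idL (L : set V) (x : Om) : OmL L := x.

Lemma mid (L : set V) : measurable_fun (setT : set Om) (@idL L).
Proof. move=> _ Y mY; rewrite setTI; exact: (@F_sub (~` L) _ mY). Qed.

Lemma PF (L : set V) (m1 m2 : {measure set Om -> \bar R}) (f : Om -> \bar R) :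
  (forall C, F_ (~` L) C -> m1 C = m2 C) ->
  measurable_fun (setT : set (OmL L)) f -> (forall x, (0 <= f x)%E) ->
  (\int[m1]_x f x = \int[m2]_x f x)%E.
Proof.
move=> H mf f0.
have E1 := ge0_integral_pushforward (@mid L) m1 (@measurableT _ (OmL L)) mf (fun y _ => f0 y).
have E2 := ge0_integral_pushforward (@mid L) m2 (@measurableT _ (OmL L)) mf (fun y _ => f0 y).
rewrite (@preimage_setT Om (OmL L) (@idL L)) in E1 E2.
have HP : forall C : set (OmL L), measurable C -> pushforward m1 (@idL L) C = pushforward m2 (@idL L) C.
  by move=> C mC; exact: (H C mC).
rewrite -[LHS]E1 -[RHS]E2.
apply: eq_measure_integral; [exact: mid|exact: mid|].
by move=> ? ? C mC _; exact: HP.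
Qed.

Lemma Klem (L : set V) (b : q.-tuple Om) (rho : {measure set Om -> \bar R}) (r : Om -> R) :
  (forall C, F_ (~` L) C -> rho C = empirical R b C) ->
  measurable_fun (setT : set (OmL L)) r -> (forall x, 0 <= r x) ->
  (\int[rho]_x (r x)%:E = ((q%:R)^-1 * \sum_(i < q) r (tnth b i))%:E)%E.
Proof.
move=> H mr r0.
have hc : 0 <= (q%:R : R)^-1 by rewrite invr_ge0.
pose c : {nonneg R} := NngNum hc.
pose E : {measure set Om -> \bar R} := mscale c (msum (fun k => @dirac _ Om (nth (w0 : Om) b k) R) q).
have mrE : measurable_fun (setT : set (OmL L)) (fun x => (r x)%:E).
  exact/measurable_EFinP.
have HE : forall C, F_ (~` L) C -> rho C = E C.
  move=> C HC; rewrite H //.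
  rewrite /E /= /mscale /msum /= /empirical EFinM; congr (_ * _)%E.
  rewrite -sumEFin; apply: eq_bigr => i _.
  by rewrite /dirac indicE (tnth_nth (w0 : Om)).
have r0' : forall x, (0 <= (r x)%:E)%E by move=> x; rewrite lee_fin.
have HPF := (@PF L rho E (fun x => (r x)%:E) HE mrE r0').
rewrite HPF.
have mrT : measurable_fun (setT : set Om) (fun x : Om => (r x)%:E) := mfunLT mrE.
rewrite (ge0_integral_mscale _ measurableT c mrT (fun x _ => r0' x)).
rewrite (ge0_integral_measure_sum _ measurableT (fun x _ => r0' x) mrT).
rewrite EFinM; congr (_ * _)%E.
rewrite -sumEFin; apply: eq_bigr => i _.
rewrite (integral_dirac _ measurableT mrT).
by rewrite diracE in_setT mul1e (tnth_nth (w0 : Om)).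
Qed.


Lemma fin01 (x : \bar R) : (0 <= x <= 1)%E -> x \is a fin_num.
Proof.
case/andP => x0 x1; rewrite ge0_fin_numE //.
by apply: (le_lt_trans x1); exact: ltry.
Qed.

Fixpoint iavg (b : q.-tuple Om) (n : nat) : (n.-tuple Om -> R) -> R :=
  match n with
  | 0 => fun f => f [tuple]
  | m.+1 => fun f => (q%:R)^-1 * \sum_(i < q) iavg b (fun t => f (cons_tuple (tnth b i) t))
  end.

Lemma iavg_ext b n (f g : n.-tuple Om -> R) : (forall t, f t = g t) -> iavg b f = iavg b g.
Proof. by move=> H; have -> : f = g by apply: funext. Qed.

Lemma iavg_ge0 b n (f : n.-tuple Om -> R) : (forall t, 0 <= f t) -> 0 <= iavg b f.
Proof.
elim: n f => [|n IH] f H /=; first exact: H.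
apply: mulr_ge0; first by rewrite invr_ge0.
apply: sumr_ge0 => i _; apply: IH => t; exact: H.
Qed.

Lemma iavgB b n (f g : n.-tuple Om -> R) : iavg b (fun t => f t - g t) = iavg b f - iavg b g.
Proof.
elim: n f g => [|n IH] f g //=.
rewrite -mulrBr -sumrB; congr (_ * _); apply: eq_bigr => i _.
exact: (IH (fun t => f (cons_tuple (tnth b i) t)) (fun t => g (cons_tuple (tnth b i) t))).
Qed.

Lemma iavg_abs b n (f : n.-tuple Om -> R) (M : R) : (forall t, `|f t| <= M) -> `|iavg b f| <= M.
Proof.
elim: n f => [|n IH] f H /=; first exact: H.
have q0 : 0 <= (q%:R : R)^-1 by rewrite invr_ge0.
rewrite normrM ger0_norm //.
have qp : (0 < (q%:R : R)) by rewrite ltr0n.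
apply: (le_trans (ler_wpM2l q0 (ler_norm_sum _ _ _))).
apply: (le_trans (ler_wpM2l q0 (ler_sum _ (fun i _ => IH _ (fun t => H (cons_tuple (tnth b i) t)))))).
rewrite sumr_const card_ord.
have E : q%:R^-1 * (M *+ q) = M :> R.
  rewrite -mulr_natr; field; by rewrite gt_eqF.
by rewrite E.
Qed.


Lemma iavg_sum b n (a : R) (g : Om -> R) :
  iavg b (fun t : n.-tuple Om => a + \sum_(j < n) g (tnth t j)) =
  a + n%:R * ((q%:R)^-1 * \sum_(i < q) g (tnth b i)).
Proof.
have qp : (0 < (q%:R : R)) by rewrite ltr0n.
elim: n a => [|n IH] a /=; first by rewrite big_ord0 mul0r.
have E : forall i : 'I_q,
  iavg b (fun t : n.-tuple Om => a + \sum_(j < n.+1) g (tnth (cons_tuple (tnth b i) t) j)) =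
  (a + g (tnth b i)) + n%:R * ((q%:R)^-1 * \sum_(i < q) g (tnth b i)).
  move=> i; rewrite -IH; apply: iavg_ext => t.
  by rewrite big_ord_recl tnth0 addrA; congr (_ + _); apply: eq_bigr => j _; rewrite tnthS.
rewrite (eq_bigr _ (fun i _ => E i)) big_split big_split /= !sumr_const card_ord.
move: (\sum_(i < q) g (tnth b i)) => m.
rewrite -[a *+ q]mulr_natr -[(_ * _) *+ q]mulr_natr -addn1 natrD.
have : (q%:R : R) != 0 by rewrite gt_eqF.
move: (q%:R : R) (n%:R : R) => Q N HQ.
field; exact: HQ.
Qed.

Lemma iavg_contr b (i0 : 'I_q) n (H : n.-tuple Om -> R) (M : R) :
  (forall t, `|H t| <= M) -> H [tuple of nseq n (tnth b i0)] = 0 ->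
  `|iavg b H| <= (1 - ((q%:R)^-1)^+n) * M.
Proof.
have qp : (0 < (q%:R : R)) by rewrite ltr0n.
have q0 : 0 <= (q%:R : R)^-1 by rewrite invr_ge0.
elim: n H => [|n IH] H HM H0 /=.
  have -> : [tuple] = [tuple of nseq 0 (tnth b i0)] by exact/val_inj.
  by rewrite H0 normr0 expr0 subrr mul0r.
rewrite normrM ger0_norm //.
apply: (le_trans (ler_wpM2l q0 (ler_norm_sum _ _ _))).
rewrite (bigD1 i0) //=.
have H1 : `|iavg b (fun t => H (cons_tuple (tnth b i0) t))| <= (1 - ((q%:R)^-1)^+n) * M.
  apply: IH; first by move=> t; exact: HM.
  have -> : cons_tuple (tnth b i0) [tuple of nseq n (tnth b i0)] = [tuple of nseq n.+1 (tnth b i0)].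
    exact/val_inj.
  exact: H0.
have H2 : \sum_(i < q | i != i0) `|iavg b (fun t => H (cons_tuple (tnth b i) t))| <=
          \sum_(i < q | i != i0) M.
  apply: ler_sum => i _; apply: iavg_abs => t; exact: HM.
have H3 : \sum_(i < q) M = M + \sum_(i < q | i != i0) M by rewrite (bigD1 i0).
rewrite sumr_const card_ord in H3.
set s1 := \sum_(i < q | i != i0) `|_| in H2 *.
set s2 := \sum_(i < q | i != i0) M in H2 H3.
have Hs2 : s2 = M *+ q - M by rewrite H3 addrAC subrr add0r.
have E : (1 - (q%:R)^-1 ^+ n.+1) * M = (q%:R)^-1 * ((1 - (q%:R)^-1 ^+ n) * M + (M *+ q - M)).
  rewrite exprS -[M *+ q]mulr_natr.
  have : (q%:R : R) != 0 by rewrite gt_eqF.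
  move: (q%:R : R) => Q HQ.
  field; exact: HQ.
rewrite E; apply: ler_wpM2l => //.
by apply: lerD => //; rewrite -Hs2.
Qed.


Lemma iavg_meas (L : set V) b n (G : Om -> n.-tuple Om -> R) :
  (forall t, measurable_fun (setT : set (OmL L)) (fun x => G x t)) ->
  measurable_fun (setT : set (OmL L)) (fun x => iavg b (G x)).
Proof.
elim: n G => [|n IH] G HG /=; first exact: HG.
apply: measurable_funM; first exact: measurable_cst.
apply: measurable_sum => i; apply: IH => t; exact: HG.
Qed.

Lemma Kiter (L : set V) b (rho : probability Om R) :
  (forall C, F_ (~` L) C -> rho C = empirical R b C) ->
  forall n (F : n.-tuple Om -> \bar R),
  (forall B : set (\bar R), measurable B -> Fq_ (q:=n) (~` L) (F @^-1` B)) ->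
  (forall t, (0 <= F t <= 1)%E) ->
  iter_int rho F = (iavg b (fun t => fine (F t)))%:E.
Proof.
move=> Hr; elim => [|n IH] F HF Fb /=.
  by rewrite fineK //; exact: fin01.
have E : forall x : Om, iter_int rho (fun t => F (cons_tuple x t)) =
    (iavg b (fun t => fine (F (cons_tuple x t))))%:E.
  move=> x; apply: IH.
  - move=> B mB; exact: (cons_fix x (HF B mB)).
  - move=> t; exact: Fb.
under eq_integral => x _ do rewrite E.
rewrite (Klem Hr) //.
- apply: iavg_meas => t.
  apply: (measurableT_comp (fine_measurable (@measurableT _ (\bar R)))).
  apply: mfunL => B mB; exact: (cons_sec t (HF B mB)).
- move=> x; apply: iavg_ge0 => t; apply: fine_ge0; by case/andP: (Fb (cons_tuple x t)).
Qed.


Lemma iter_sum (P : probability Om R) n (a : \bar R) (g : Om -> \bar R) :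
  measurable_fun (setT : set Om) g -> (forall x, 0 <= g x)%E -> (0 <= a)%E ->
  iter_int P (fun t : n.-tuple Om => a + \sum_(j < n) g (tnth t j))%E =
  (a + n%:R%:E * \int[P]_x g x)%E.
Proof.
move=> mg g0; elim: n a => [|n IH] a a0 /=.
  by rewrite big_ord0 mul0e !adde0.
have E : forall x, iter_int P (fun t : n.-tuple Om =>
    a + \sum_(j < n.+1) g (tnth (cons_tuple x t) j))%E =
    ((a + g x) + n%:R%:E * \int[P]_x g x)%E.
  move=> x; rewrite -IH; last exact: adde_ge0.
  congr (iter_int P _); apply: funext => t.
  by rewrite big_ord_recl tnth0 addeA; congr (_ + _)%E; apply: eq_bigr => j _; rewrite tnthS.
under eq_integral => x _ do rewrite E.
have I0 : (0 <= \int[P]_x g x)%E by apply: integral_ge0 => x _.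
have c0 : (0 <= n%:R%:E * \int[P]_x g x)%E by apply: mule_ge0.
have m1 : measurable_fun (setT : set Om) (fun x => a + g x)%E.
  exact: (emeasurable_funD (measurable_cst a) mg).
rewrite (ge0_integralD P measurableT (fun x _ => adde_ge0 a0 (g0 x)) m1
   (fun x _ => c0) (measurable_cst _)).
rewrite (ge0_integralD P measurableT (fun x _ => a0) (measurable_cst _)
   (fun x _ => g0 x) mg).
have P1 : (P : measure Om R) setT = 1%E := probability_setT P.
rewrite !integral_cst // !P1.
rewrite !mule1.
rewrite -addeA; congr (a + _)%E.
by rewrite -[n.+1]add1n natrD EFinD ge0_muleDl // mul1e.
Qed.


Lemma LIN (gamma : qkernel_family w0 R q) (L : set V) (A : set Om) :
  qspecification gamma -> finite_set L -> measurable A ->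
  forall eta, gamma L eta A =
    (\sum_(j < q) ((q%:R)^-1 * fine (gamma L (diag (tnth eta j)) A))%:E)%E.
Proof.
move=> [Hspec Hcons] fL mA.
have [Hmeas Hprop] := Hspec L fL.
have qp : (0 < (q%:R : R)) by rewrite ltr0n.
have q0 : 0 <= (q%:R : R)^-1 by rewrite invr_ge0.
pose G := fun eta : q.-tuple Om => fine (gamma L eta A).
have G01 : forall eta, (0 <= gamma L eta A <= 1)%E.
  by move=> eta; rewrite measure_ge0 /=; exact: probability_le1.
have Gr : forall eta, gamma L eta A = (G eta)%:E.
  by move=> eta; rewrite /G fineK //; exact: fin01.
have GR : forall eta, 0 <= G eta <= 1.
  by move=> eta; have := G01 eta; rewrite Gr !lee_fin.
pose g := fun x : Om => (q%:R)^-1 * G (diag x).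
pose hR := fun eta : q.-tuple Om => G eta - \sum_(j < q) g (tnth eta j).
have hb : forall eta, `|hR eta| <= 1.
  move=> eta; rewrite /hR.
  have s0 : 0 <= \sum_(j < q) g (tnth eta j).
    apply: sumr_ge0 => j _; apply: mulr_ge0 => //; by case/andP: (GR (diag (tnth eta j))).
  have gle : forall x, g x <= (q%:R)^-1.
    move=> x; rewrite /g; apply: ler_piMr => //; by case/andP: (GR (diag x)).
  have s1 : \sum_(j < q) g (tnth eta j) <= 1.
    apply: (le_trans (ler_sum _ (fun j _ => gle (tnth eta j)))).
    rewrite sumr_const card_ord.
    have -> : (q%:R : R)^-1 *+ q = 1 by rewrite -mulr_natr; field; rewrite gt_eqF.
    by [].
  have := GR eta; move: (G eta) (\sum_(j < q) g (tnth eta j)) s0 s1 => x y s0 s1 /andP[x0 x1].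
  rewrite ler_norml; apply/andP; split; lra.
have Hfix : forall b, hR b = iavg b hR.
  move=> b.
  have Hr : forall C, F_ (~` L) C -> (gamma L b) C = empirical R b C.
    by move=> C HC; exact: Hprop.
  have HK := @Kiter L b (gamma L b) Hr q (fun zeta => gamma L zeta A) (Hmeas A mA) G01.
  have Hc := Hcons L L fL fL (@subset_refl _ L) A mA b.
  rewrite /qcomp in Hc.
  have HG : G b = iavg b G.
    apply: EFin_inj; rewrite -Gr -Hc; exact: HK.
  have HS := iavg_sum b q 0 g.
  have HS' : iavg b (fun t => 0 + \sum_(j < q) g (tnth t j)) = \sum_(i < q) g (tnth b i).
    by rewrite HS add0r mulrA mulfV ?gt_eqF // mul1r.
  rewrite /hR {1}HG -HS' -iavgB; apply: iavg_ext => t; by rewrite add0r.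
pose E := [set `|hR eta| | eta in [set: q.-tuple Om]].
have En : E !=set0 by exists `|hR [tuple of nseq q (w0 : Om)]|; exists [tuple of nseq q (w0 : Om)].
have Eub : ubound E 1 by move=> _ [eta _ <-]; exact: hb.
have Hsup : ubound E (sup E) by apply: sup_upper_bound; split => //; exists 1.
pose M := sup E.
have hM : forall eta, `|hR eta| <= M by move=> eta; apply: Hsup; exists eta.
have M0 : 0 <= M by apply: le_trans (hM [tuple of nseq q (w0 : Om)]).
pose i0 : 'I_q := Ordinal hq.
have Hc : forall b, `|hR b| <= (1 - ((q%:R)^-1)^+q) * M.
  move=> b; rewrite Hfix; apply: (@iavg_contr b i0) => //.
  rewrite /hR.
  have -> : \sum_(j < q) g (tnth [tuple of nseq q (tnth b i0)] j) = \sum_(j < q) g (tnth b i0).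
    by apply: eq_bigr => j _; rewrite tnth_nseq.
  rewrite sumr_const card_ord /g.
  have -> : ((q%:R : R)^-1 * G (diag (tnth b i0))) *+ q = G (diag (tnth b i0)).
    by rewrite -mulr_natr; field; rewrite gt_eqF.
  by rewrite /diag subrr.
have HMle : M <= (1 - ((q%:R)^-1)^+q) * M by apply: ge_sup => // _ [eta _ <-]; exact: Hc.
have cpos : 0 < ((q%:R : R)^-1)^+q by apply: exprn_gt0; rewrite invr_gt0.
have HM0 : M <= 0.
  move: HMle; rewrite mulrBl mul1r => HMle.
  have : ((q%:R : R)^-1)^+q * M <= 0 by lra.
  by rewrite pmulr_rle0.
move=> eta.
have h0 : hR eta = 0.
  by apply/normr0_eq0/eqP; rewrite eq_le normr_ge0 andbT (le_trans (hM eta) HM0).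
rewrite Gr sumEFin; congr (_%:E).
by apply/eqP; rewrite -subr_eq0; apply/eqP; exact: h0.
Qed.


Lemma emp_int (lam : probability Om R) (C : set Om) : measurable C ->
  iter_int lam (fun sigma : q.-tuple Om => empirical R sigma C) = lam C.
Proof.
move=> mC.
have qp : (0 < (q%:R : R)) by rewrite ltr0n.
pose g := fun x : Om => (((q%:R : R))^-1 * (\1_C x : R))%:E.
have -> : (fun sigma : q.-tuple Om => empirical R sigma C) =
          (fun sigma => 0 + \sum_(j < q) g (tnth sigma j))%E.
  apply: funext => sigma; rewrite add0e /empirical /g sumEFin mulr_sumr //.
have mg : measurable_fun (setT : set Om) g.
  apply/measurable_EFinP; apply: measurable_funM; first exact: measurable_cst.
  exact: measurable_indic.
have g0 : forall x, (0 <= g x)%E.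
  move=> x; rewrite /g lee_fin; apply: mulr_ge0; first by rewrite invr_ge0.
  by rewrite indicE.
rewrite (iter_sum lam q mg g0 (lexx (0 : \bar R)%E)) add0e.
have -> : (\int[lam]_x g x = ((q%:R)^-1)%:E * \int[lam]_x (\1_C x)%:E)%E.
  have mi : measurable_fun (setT : set Om) (fun x => (\1_C x : R)%:E).
    exact/measurable_EFinP/measurable_indic.
  have i0 : forall x, setT x -> (0 <= (\1_C x : R)%:E)%E by move=> x _; rewrite lee_fin indicE.
  have k0 : (0 <= ((q%:R : R)^-1)%:E)%E by rewrite lee_fin invr_ge0.
  rewrite -(ge0_integralZl lam measurableT mi i0 k0).
  by apply: eq_integral => x _; rewrite /g EFinM.
rewrite integral_indic // setIT muleA -EFinM mulfV ?gt_eqF // mul1e. reflexivity.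
Qed.

Lemma incl (gamma : qkernel_family w0 R q) : qspecification gamma ->
  forall mu : probability Om R, (forall L, finite_set L -> ImVq gamma L mu) -> Gq gamma mu.
Proof.
move=> Hsp mu Hmu L fL A mA.
have [lam Hlam] := Hmu L fL.
have [Hmeas Hprop] := Hsp.1 L fL.
pose g := fun x : Om => ((q%:R)^-1 * fine (gamma L (diag x) A))%:E.
have Hlin : forall eta, gamma L eta A = (0 + \sum_(j < q) g (tnth eta j))%E.
  by move=> eta; rewrite add0e (LIN Hsp fL mA eta).
have mgL : measurable_fun (setT : set (OmL L)) g.
  apply/measurable_EFinP; apply: measurable_funM; first exact: measurable_cst.
  apply: (measurableT_comp (fine_measurable (@measurableT _ (\bar R)))).
  apply: mfunL => B mB; exact: (diag_pre (Hmeas A mA B mB)).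
have mg := mfunLT mgL.
have g0 : forall x, (0 <= g x)%E.
  move=> x; rewrite /g lee_fin; apply: mulr_ge0; first by rewrite invr_ge0.
  apply: fine_ge0; exact: measure_ge0.
have HV : forall P : probability Om R, Vq gamma L P A = (0 + q%:R%:E * \int[P]_x g x)%E.
  move=> P; rewrite /Vq -(iter_sum P q mg g0 (lexx (0 : \bar R)%E)).
  by congr (iter_int P _); apply: funext => eta; exact: Hlin.
have Hag : forall C, F_ (~` L) C -> mu C = lam C.
  move=> C HC; have mC := F_sub HC.
  rewrite -(Hlam C mC) /Vq -(emp_int lam mC).
  by congr (iter_int lam _); apply: funext => eta; exact: Hprop.
rewrite -(Hlam A mA) !HV.
by rewrite (PF Hag mgL g0).
Qed.

End dev.

Unset Implicit Arguments.
Local Close Scope ring_scope.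

Theorem mainTheorem10 (R : realType) (V : countType) (S : finType)
  (w0 : V -> S) (q : nat) (gamma : qkernel_family w0 R q) :
  (0 < q)%N ->
  qspecification gamma ->
  assumption1 gamma ->
  Gq gamma = \bigcap_(L in [set L : set V | finite_set L]) ImVq gamma L.
Proof.
move=> hq Hsp _; apply/seteqP; split.
- move=> mu Hmu L fL; exists mu => A mA; exact: Hmu.
- move=> mu Hmu; apply: (incl hq Hsp) => L fL; exact: Hmu L fL.
Qed.
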